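(* Let $\mathcal{C}$ be a simplicial complex on ground set $[n]$. Then $\mathcal{C}$ is unimodular if and only if its Alexander dual $\mathcal{C}^*$ is unimodular.
   Context: A simplicial complex on $[n]$ is a family of subsets of $[n]$ closed under subsets; facets are inclusion-maximal faces. $\mathcal{C}^*=\{S\subseteq[n]:[n]\setminus S\notin\mathcal{C}\}$, on ground set $[n]$. $\mathcal{A}_{\mathcal{C}}$ is the $0/1$ matrix with columns indexed by $\mathbf{i}\in\{1,2\}^n$ and rows indexed by pairs $(F,\mathbf{e})$ with $F$ a facet and $\mathbf{e}\in\{1,2\}^F$; entry $1$ iff $\mathbf{e}=\mathbf{i}|_F$. An integer matrix is unimodular if every circuit (nonzero integer kernel vector with coprime entries and inclusion-minimal support) has entries in $\{0,\pm1\}$. $\mathcal{C}$ is unimodular if $\mathcal{A}_{\mathcal{C}}$ is. *)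

(* Defs.v *)
From mathcomp Require Import all_boot all_order all_algebra.
Set Implicit Arguments. Unset Strict Implicit. Unset Printing Implicit Defensive.
Import GRing.Theory Num.Theory.
Local Open Scope ring_scope.

(* Ground set [n] is 'I_n.  The set {1,2} is encoded by bool (false = 1, true = 2). *)

Definition simplicial_complex (n : nat) (C : {set {set 'I_n}}) : Prop :=
  forall F G : {set 'I_n}, F \in C -> G \subset F -> G \in C.

Definition is_facet (n : nat) (C : {set {set 'I_n}}) (F : {set 'I_n}) : bool :=
  (F \in C) && [forall G in C, (F \subset G) ==> (G == F)].

Definition alexander_dual (n : nat) (C : {set {set 'I_n}}) : {set {set 'I_n}} :=
  [set S : {set 'I_n} | ~: S \notin C].

Definition colT (n : nat) := {ffun 'I_n -> bool}.

(* Rows of A_C : pairs (F, e) with F a facet and e in {1,2}^F; e is represented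
   by a function on [n] which is canonically "1" (false) outside F. *)
Definition is_row (n : nat) (C : {set {set 'I_n}}) (r : {set 'I_n} * colT n) : bool :=
  is_facet C r.1 && [forall j, (j \notin r.1) ==> ~~ r.2 j].

Definition rowT (n : nat) (C : {set {set 'I_n}}) :=
  {r : {set 'I_n} * colT n | is_row C r}.

Definition A_mat (n : nat) (C : {set {set 'I_n}}) (r : rowT C) (i : colT n) : int :=
  ([forall j in (val r).1, (val r).2 j == i j] : bool)%:R.

Section Unimod.
Variables (R K : finType) (A : R -> K -> int).

Definition in_kernel (u : {ffun K -> int}) : bool :=
  [forall r, \sum_(k : K) A r k * u k == 0].

Definition supp (u : {ffun K -> int}) : {set K} := [set k | u k != 0].

Definition circuit (u : {ffun K -> int}) : Prop :=
  [/\ in_kernel u, u != 0,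
      \big[gcdn/0%N]_(k : K) `|u k|%N = 1%N &
      forall v : {ffun K -> int}, in_kernel v -> v != 0 -> ~ (supp v \proper supp u)].

Definition unimodular_mx : Prop :=
  forall u, circuit u -> forall k, u k \in [:: -1; 0; 1].
End Unimod.

Definition unimodular_complex (n : nat) (C : {set {set 'I_n}}) : Prop :=
  unimodular_mx (@A_mat n C).

(* Main.v *)
Require Import Defs.
From mathcomp Require Import all_boot all_order all_algebra.
From mathcomp Require Import ring.
From Stdlib Require Import Classical.
Set Implicit Arguments. Unset Strict Implicit. Unset Printing Implicit Defensive.
Import Order.TTheory GRing.Theory Num.Theory.
Local Open Scope ring_scope.

Section Abs.
Variable K : finType.
Definition minimal (X : {ffun K -> int} -> Prop) (u : {ffun K -> int}) : Prop :=
  [/\ X u, u != 0 & forall v, X v -> v != 0 -> ~ (supp v \proper supp u)].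
Definition regular (X : {ffun K -> int} -> Prop) : Prop :=
  forall u, minimal X u -> forall k l, u k != 0 -> u l != 0 -> `|u k| = `|u l|.
Lemma in_supp (u : {ffun K -> int}) k : (k \in supp u) = (u k != 0).
Proof. by rewrite inE. Qed.
Lemma neq0_ffun (u : {ffun K -> int}) k : u k != 0 -> u != 0.
Proof. by apply: contraNneq => ->; rewrite ffunE. Qed.

Lemma biggcd_dvd (u : {ffun K -> int}) j : (\big[gcdn/0%N]_k `|u k|%N %| `|u j|%N)%N.
Proof. by rewrite (bigD1 j) //= dvdn_gcdl. Qed.

Lemma dvd_biggcd (u : {ffun K -> int}) a : (forall j, a %| `|u j|)%N -> (a %| \big[gcdn/0%N]_k `|u k|%N)%N.
Proof.
move=> h; apply: (big_ind (fun x => a %| x)%N) => [|x y hx hy|j _].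
- exact: dvdn0.
- by rewrite dvdn_gcd hx hy.
- exact: h.
Qed.

Variables (R : finType) (A : R -> K -> int).

Lemma unimod_regular : unimodular_mx A <-> regular (fun u => in_kernel A u).
Proof.
split.
- move=> hU u [ku u0 um] k l hk hl.
  set G := \big[gcdn/0%N]_j `|u j|%N.
  have Gd : forall j, (G%:Z %| u j)%Z by move=> j; rewrite dvdzE biggcd_dvd.
  have G0 : G%:Z != 0.
    apply/eqP => e; have := Gd k; rewrite e dvdzE /= dvd0n absz_eq0; by rewrite (negbTE hk).
  pose u' := [ffun j => (u j %/ G%:Z)%Z].
  have uE : forall j, u j = u' j * G%:Z by move=> j; rewrite ffunE divzK.
  have su : forall j, (u' j != 0) = (u j != 0).
    by move=> j; rewrite uE mulf_eq0 negb_or G0 andbT.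
  have c : circuit A u'.
    split.
    + apply/forallP => r; move/forallP: ku => /(_ r) /eqP hr.
      apply/eqP; apply: (mulIf G0); rewrite mul0r big_distrl /=; rewrite -[RHS]hr.
      by apply: eq_bigr => j _; rewrite -mulrA -uE.
    + by apply: (@neq0_ffun _ k); rewrite su.
    + apply/eqP; rewrite -(eqn_pmul2l (m:=G)); last first.
        by rewrite lt0n; apply: contraNneq G0 => ->.
      rewrite muln1 (big_endo (muln G) (muln_gcdr G)) ?muln0 //.
      by apply/eqP; apply: eq_bigr => j _; rewrite [in RHS]uE abszM mulnC.
    + move=> v kv v0; have -> : supp u' = supp u by apply/setP => j; rewrite !in_supp su.
      exact: um.
  have one : forall j, u j != 0 -> `|u j| = G%:Z.
    move=> j hj; have := hU _ c j; have nG : `|G%:Z| = G%:Z by [].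
    rewrite uE normrM nG.
    have : u' j != 0 by rewrite su.
    by rewrite !inE; case: (u' j) => [[|[|?]]|[|?]] //= _ _; rewrite mul1r.
  by rewrite !one.
- move=> hR u [ku u0 g1 um] k.
  case: (boolP (u k == 0)) => [/eqP ->|hk]; first by rewrite !inE eqxx orbT.
  have hm : minimal (fun u => in_kernel A u) u by split => //.
  have ad : (`|u k| %| 1)%N.
    rewrite -g1; apply: dvd_biggcd => j; case: (boolP (u j == 0)) => [/eqP ->|hj]; first exact: dvdn0.
    have := hR _ hm k j hk hj; rewrite -!abszE => [[->]]; exact: dvdnn.
  move: ad hk; rewrite dvdn1 !inE; case: (u k) => [[|[|?]]|[|?]] //.
Qed.

Lemma ffun_neq0 (u : {ffun K -> int}) : u != 0 -> exists k, u k != 0.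
Proof.
move=> h; apply: NNPP => hn; move/negP: h; apply; apply/eqP/ffunP => k.
rewrite ffunE; apply/eqP; apply: NNPP => hk; apply: hn; by exists k; apply/negP.
Qed.
Lemma regular_ext (X Y : {ffun K -> int} -> Prop) :
  (forall u, X u <-> Y u) -> regular X -> regular Y.
Proof.
move=> e hX u [Yu u0 um]; apply: hX; split => //; first by apply/e.
by move=> v /e Yv; apply: um.
Qed.

Variable sig : K -> int.
Hypothesis sig2 : forall k, sig k * sig k = 1.
Definition tw (u : {ffun K -> int}) : {ffun K -> int} := [ffun k => sig k * u k].
Lemma twK u : tw (tw u) = u.
Proof. by apply/ffunP => k; rewrite !ffunE mulrA sig2 mul1r. Qed.
Lemma supp_tw u : supp (tw u) = supp u.
Proof.
apply/setP => k; rewrite !in_supp ffunE mulf_eq0 negb_or; case: eqP => //= h.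
by have := sig2 k; rewrite h mul0r.
Qed.
Lemma tw_neq0 u : (tw u != 0) = (u != 0).
Proof.
apply/idP/idP => h.
  apply: contraNneq h => ->; apply/eqP/ffunP=> k; by rewrite !ffunE mulr0.
have [k hk] := ffun_neq0 h; apply: (@neq0_ffun _ k); by rewrite -in_supp supp_tw in_supp.
Qed.

Lemma regular_tw X : regular X -> regular (fun u => X (tw u)).
Proof.
move=> hX u [Xu u0 um] k l hk hl.
have m : minimal X (tw u).
  split => //; first by rewrite tw_neq0.
  move=> v Xv v0; rewrite supp_tw -(supp_tw v); apply: um; by rewrite ?twK ?tw_neq0.
have := hX _ m k l; rewrite !ffunE !normrM.
have nk : forall k, `|sig k| = 1.
  by move=> j; apply/eqP; rewrite -sqr_norm_eq1 expr2 sig2.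
rewrite !nk !mul1r; apply.
- rewrite mulf_eq0 negb_or hk andbT; apply/eqP=> e; by have := sig2 k; rewrite e mul0r.
- rewrite mulf_eq0 negb_or hl andbT; apply/eqP=> e; by have := sig2 l; rewrite e mul0r.
Qed.

End Abs.
Lemma sum_enum (T : finType) (F : T -> rat) :
  \sum_(r < #|T|) F (enum_val r) = \sum_t F t.
Proof.
by rewrite (reindex (@enum_rank T)) /=; [apply: eq_bigr => t _; rewrite enum_rankK | apply: onW_bij; exact: enum_rank_bij].
Qed.

Lemma fredholm (J K : finType) (f : J -> K -> rat) (b : K -> rat) :
  (exists lam : J -> rat, forall k, b k = \sum_j lam j * f j k) \/
  (exists x : K -> rat, (forall j, \sum_k f j k * x k = 0) /\ \sum_k b k * x k != 0).
Proof.
pose M : 'M[rat]_(#|J|, #|K|) := \matrix_(r, c) f (enum_val r) (enum_val c).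
pose B : 'rV[rat]_#|K| := \row_c b (enum_val c).
case: (boolP (B <= M)%MS) => HB.
- left; case/submxP: HB => L HL; exists (fun j => L 0 (enum_rank j)) => k.
  have := congr1 (fun A : 'rV[rat]_#|K| => A 0 (enum_rank k)) HL; rewrite !mxE enum_rankK => ->.
  rewrite -(sum_enum (fun j => L 0 (enum_rank j) * f j k)).
  by apply: eq_bigr => r _; rewrite !mxE enum_valK enum_rankK.
- right; move: HB; rewrite submxE => HB.
  have [c hc] : exists c, (B *m cokermx M) 0 c != 0.
    case: (pickP (fun c => (B *m cokermx M) 0 c != 0)) => [c hc|h0]; first by exists c.
    move/negP: HB; case; apply/eqP/matrixP => i j.
    by rewrite ord1 [RHS]mxE; apply/eqP; move: (h0 j) => /= /negbFE.
  exists (fun k => cokermx M (enum_rank k) c); split.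
  + move=> j; have := congr1 (fun A : 'M[rat]_(#|J|, #|K|) => A (enum_rank j) c) (mulmx_coker M).
    rewrite !mxE => e; rewrite -[RHS]e -(sum_enum (fun k => f j k * cokermx M (enum_rank k) c)).
    by apply: eq_bigr => r _; rewrite !mxE enum_rankK enum_valK.
  + move: hc; rewrite !mxE -(sum_enum (fun k => b k * cokermx M (enum_rank k) c)).
    congr (_ != _); apply: eq_bigr => r _; by rewrite !mxE enum_valK.
Qed.

Lemma clear_den (K : finType) (x : K -> rat) :
  exists (y : {ffun K -> int}) (d : int), d != 0 /\ forall k, (y k)%:~R = d%:~R * x k.
Proof.
exists [ffun k => numq (x k) * \prod_(j | j != k) denq (x j)], (\prod_j denq (x j)).
split.
  by rewrite prodf_seq_neq0; apply/allP => j _; rewrite denq_neq0.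
move=> k; rewrite ffunE [in RHS](bigD1 k) //= !intrM.
set P := (\prod_(j | j != k) denq (x j))%:~R.
rewrite numqE; ring.
Qed.

Section Dual.
Variables (I K : finType) (g : I -> K -> int) (c : int).
Hypotheses (c0 : c != 0)
  (O1 : forall a b, \sum_k g a k * g b k = c * (a == b)%:R)
  (O2 : forall k l, \sum_a g a k * g a l = c * (k == l)%:R).

Definition V (P : pred I) (u : {ffun K -> int}) : Prop :=
  forall a, P a -> \sum_k g a k * u k = 0.

Lemma orth P v w : V P v -> V (predC P) w -> \sum_k v k * w k = 0.
Proof.
move=> hv hw.
have H0 : \sum_a (\sum_k g a k * v k) * (\sum_l g a l * w l) = 0.
  apply: big1 => a _; case: (boolP (P a)) => h; first by rewrite hv // mul0r.
  by rewrite hw ?mulr0.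
apply: (mulfI c0); rewrite mulr0 -[RHS]H0.
under [RHS]eq_bigr do rewrite big_distrl /=.
under [RHS]eq_bigr do under eq_bigr do rewrite big_distrr /=.
rewrite [RHS]exchange_big /=.
under [RHS]eq_bigr do rewrite exchange_big /=.
rewrite big_distrr /=; apply: eq_bigr => k _.
transitivity (\sum_l v k * w l * (\sum_a g a k * g a l)).
  rewrite (bigD1 k) //= O2 eqxx big1 ?addr0; first by rewrite mulr1 mulrC.
  by move=> l lk; rewrite O2 eq_sym (negbTE lk) mulr0 mulr0.
apply: eq_bigr => l _; rewrite big_distrr /=; apply: eq_bigr => a _.
by rewrite mulrACA [v k * _]mulrC [w l * _]mulrC.
Qed.

Lemma V_lin P (x y : {ffun K -> int}) (al be : int) :
  V P x -> V P y -> V P [ffun k => al * x k - be * y k].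
Proof.
move=> hx hy a Pa.
under eq_bigr => k _ do rewrite ffunE mulrBr mulrCA [g a k * (be * _)]mulrCA.
by rewrite sumrB -!big_distrr /= hx // hy // !mulr0 subr0.
Qed.

Lemma descend P t0 m : forall x : {ffun K -> int}, (#|supp x| <= m)%N -> V P x -> x t0 != 0 ->
  exists v, [/\ minimal (V P) v, supp v \subset supp x & v t0 != 0].
Proof.
elim: m => [|m IH] x hm Vx xt.
  have h : (0 < #|supp x|)%N by apply/card_gt0P; exists t0; rewrite in_supp.
  by rewrite leqn0 in hm; rewrite (eqP hm) in h.
case: (classic (exists v, [/\ V P v, v != 0 & supp v \proper supp x])) => [[v [Vv v0 pv]]|hn]; last first.
  exists x; split; [|exact: subxx|exact: xt].
  split => //; first exact: neq0_ffun xt.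
  by move=> v Vv v0 pv; apply: hn; exists v.
have sx : supp v \subset supp x := proper_sub pv.
have cv : (#|supp v| <= m)%N by rewrite -ltnS; exact: leq_trans (proper_card pv) hm.
case: (boolP (v t0 == 0)) => vt; last first.
  have [v' [m' s' t']] := IH v cv Vv vt; exists v'; split => //; exact: subset_trans s' sx.
have [k vk] := ffun_neq0 v0.
pose x2 : {ffun K -> int} := [ffun j => v k * x j - x k * v j].
have xk : x k != 0 by rewrite -in_supp (subsetP sx) // in_supp.
have ps : supp x2 \proper supp x.
  apply/properP; split.
    apply/subsetP => j; rewrite !in_supp ffunE; apply: contraNneq => xj0.
    have vj : v j = 0.
      apply/eqP; apply: contraT => vj.
      have : j \in supp x by rewrite (subsetP sx) // in_supp.
      by rewrite in_supp xj0 eqxx.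
    by rewrite xj0 vj !mulr0 subrr.
  by exists k; rewrite ?in_supp // ffunE mulrC subrr eqxx.
have c2 : (#|supp x2| <= m)%N by rewrite -ltnS; exact: leq_trans (proper_card ps) hm.
have V2 : V P x2 by apply: V_lin.
have t2 : x2 t0 != 0 by rewrite ffunE (eqP vt) mulr0 subr0 mulf_neq0.
have [v' [m' s' t']] := IH x2 c2 V2 t2; exists v'; split => //.
exact: subset_trans s' (proper_sub ps).
Qed.

Theorem reg_dual P : regular (V P) -> regular (V (predC P)).
Proof.
move=> HR w [Vw w0 wm] t0 t1 h0 h1.
case: (eqVneq t0 t1) => [-> //|t01].
pose T' := supp w :\ t0 :\ t1.
have hT' : forall t, (t \in T') = [&& t != t1, t != t0 & w t != 0].
  by move=> t; rewrite !inE.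
have t0T : t0 \in T' = false by rewrite hT' eqxx andbF.
have t1T : t1 \in T' = false by rewrite hT' eqxx.
have [x [Vx xT xt0]] : exists x : {ffun K -> int},
    [/\ V P x, forall t, t \in T' -> x t = 0 & x t0 != 0].
  pose f := fun (j : I + K) (k : K) => match j with
     | inl a => if P a then (g a k)%:~R else 0
     | inr t => if t \in T' then (t == k)%:R else 0 end : rat.
  case: (fredholm f (fun k => (k == t0)%:R)) => [[lam hl]|[x [hx hb]]].
  - exfalso.
    pose Y := fun k => \sum_a lam (inl a) * f (inl a) k.
    have YE : forall k, Y k = (k == t0)%:R - (if k \in T' then lam (inr k) else 0).
      move=> k; move: (hl k) => /= ->; rewrite big_sumType /=.
      have -> : \sum_t lam (inr t) * f (inr t) k = if k \in T' then lam (inr k) else 0.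
        rewrite (bigD1 k) //= big1 => [|t tk]; last first.
          by rewrite /f; case: ifP => _; rewrite ?(negbTE tk) mulr0.
        by rewrite addr0 /f; case: ifP => _; rewrite ?eqxx ?mulr1 ?mulr0.
      by rewrite addrK.
    have [y [d [d0 hy]]] := clear_den Y.
    have Vy : V (predC P) y.
      move=> b /= nPb.
      have e : \sum_k (g b k)%:~R * Y k = 0 :> rat.
        rewrite /Y; under eq_bigr do rewrite big_distrr /=.
        rewrite exchange_big /=; apply: big1 => a _.
        rewrite /f; case: (boolP (P a)) => Pa; last by apply: big1 => k _; rewrite !mulr0.
        have ab : (b == a) = false by apply/negbTE; apply: contraNneq nPb => ->.
        transitivity (lam (inl a) * (\sum_k g b k * g a k)%:~R).
          rewrite rmorph_sum big_distrr /=; apply: eq_bigr => k _; by rewrite intrM mulrCA.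
        by rewrite O1 ab mulr0 mulr0.
      apply/eqP; rewrite -(intr_eq0 rat) rmorph_sum /=.
      under eq_bigr do rewrite intrM hy mulrCA.
      by rewrite -big_distrr /= e mulr0.
    have yt0 : y t0 != 0 by rewrite -(intr_eq0 rat) hy YE eqxx t0T subr0 mulr1 intr_eq0.
    have sy : supp y \proper supp w.
      apply/properP; split.
        apply/subsetP => k; rewrite !in_supp -(intr_eq0 rat) hy YE.
        case: (eqVneq k t0) => [->|kt0]; first by rewrite h0.
        case: (boolP (k \in T')) => kT; first by rewrite hT' in kT; case/and3P: kT.
        by rewrite subr0 mulr0 eqxx.
      exists t1; first by rewrite in_supp.
      by rewrite in_supp negbK -(intr_eq0 rat) hy YE [t1 == t0]eq_sym (negbTE t01) t1T subr0 mulr0.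
    exact: (wm y Vy (neq0_ffun yt0) sy).
  - have [x' [d [d0 hx']]] := clear_den x.
    exists x'; split.
    + move=> a Pa; have := hx (inl a); rewrite /f /= Pa => e.
      apply/eqP; rewrite -(intr_eq0 rat) rmorph_sum /=.
      under eq_bigr do rewrite intrM hx' mulrCA.
      by rewrite -big_distrr /= e mulr0.
    + move=> t tT; have := hx (inr t); rewrite /f /= tT => e.
      rewrite (bigD1 t) //= eqxx mul1r big1 ?addr0 in e; last first.
        by move=> k kt; rewrite eq_sym (negbTE kt) mul0r.
      by apply/eqP; rewrite -(intr_eq0 rat) hx' e mulr0.
    + move: hb; rewrite (bigD1 t0) //= eqxx mul1r big1 ?addr0; last first.
        by move=> k kt; rewrite (negbTE kt) mul0r.
      by move=> hb; rewrite -(intr_eq0 rat) hx' mulf_neq0 ?intr_eq0.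
have [v [[Vv v0 vm] sv vt0]] := descend (leqnn #|supp x|) Vx xt0.
have o := orth Vv Vw.
have vT : forall t, t \in T' -> v t = 0.
  move=> t tT; apply/eqP; apply: contraT => vt.
  have : t \in supp x by rewrite (subsetP sv) // in_supp.
  by rewrite in_supp xT ?eqxx.
have e2 : v t0 * w t0 + v t1 * w t1 = 0.
  rewrite -o (bigD1 t0) //= (bigD1 t1) 1?eq_sym //= addrA big1 ?addr0 // => k /andP [k1 k0].
  case: (boolP (w k == 0)) => [/eqP ->|wk]; first by rewrite mulr0.
  by rewrite vT ?mul0r // hT' k1 k0 wk.
have vt1 : v t1 != 0.
  apply/negP => /eqP e1; move: e2; rewrite e1 mul0r addr0; apply/eqP; exact: mulf_neq0 vt0 h0.
have hv := HR v (And3 Vv v0 vm) t0 t1 vt0 vt1.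
have : `|v t0| * `|w t0| = `|v t1| * `|w t1|.
  by rewrite -!normrM; move/eqP: e2; rewrite addr_eq0 => /eqP ->; rewrite normrN.
by rewrite hv => /mulfI; apply; rewrite normr_eq0.
Qed.

End Dual.

Definition sg (b : bool) : int := if b then -1 else 1.
Lemma sg2 b : sg b * sg b = 1. Proof. by case: b. Qed.

Definition chi n (S : {set 'I_n}) (i : colT n) : int :=
  \prod_j (if j \in S then sg (i j) else 1).

Lemma chiM n (S : {set 'I_n}) i l :
  chi S i * chi S l = \prod_j (if j \in S then sg (i j) * sg (l j) else 1).
Proof. by rewrite /chi -big_split /=; apply: eq_bigr => j _; case: (j \in S); rewrite ?mulr1. Qed.

Lemma sum_sets n (F : 'I_n -> int) :
  \sum_(S : {set 'I_n}) \prod_j (if j \in S then F j else 1) = \prod_j (F j + 1).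
Proof. by rewrite bigA_distr. Qed.

Lemma chiO2 n (i l : colT n) : \sum_S chi S i * chi S l = 2 ^+ n * (i == l)%:R.
Proof.
under eq_bigr do rewrite chiM.
rewrite sum_sets.
case: eqP => [<-|/eqP ne].
  rewrite mulr1 (eq_bigr (fun _ => 2)) ?prodr_const ?card_ord // => j _.
  by rewrite sg2.
rewrite mulr0; have [j hj] : exists j, i j != l j.
  apply/existsP; apply: contraNT ne => /existsPn h; apply/eqP/ffunP => j.
  by have := h j; rewrite negbK => /eqP.
rewrite (bigD1 j) //=; move: hj; case: (i j); case: (l j) => //= _; by rewrite mul0r.
Qed.

Lemma chiO1 n (S T : {set 'I_n}) : \sum_(i : colT n) chi S i * chi T i = 2 ^+ n * (S == T)%:R.
Proof.
have e : forall i : colT n, chi S i * chi T i =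
   \prod_j ((if j \in S then sg (i j) else 1) * (if j \in T then sg (i j) else 1)).
  by move=> i; rewrite /chi -big_split.
under eq_bigr do rewrite e.
rewrite -(bigA_distr_bigA (fun j b => (if j \in S then sg b else 1) * (if j \in T then sg b else 1))).
rewrite (eq_bigr (fun j => if (j \in S) == (j \in T) then 2 else 0)); last first.
  move=> j _; rewrite /= big_bool /=.
  by case: (j \in S); case: (j \in T).
case: eqP => [<-|/eqP ne].
  rewrite mulr1 (eq_bigr (fun _ => 2)) ?prodr_const ?card_ord // => j _.
  by rewrite eqxx.
rewrite mulr0; have [j hj] : exists j, (j \in S) != (j \in T).
  apply/existsP; apply: contraNT ne => /existsPn h; apply/eqP/setP => j.
  by have := h j; rewrite negbK => /eqP.
by rewrite (bigD1 j) //= (negbTE hj) mul0r.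
Qed.

Lemma restr_id n (F : {set 'I_n}) (e i : colT n) :
  \sum_(S : {set 'I_n} | S \subset F) chi S e * chi S i = 2 ^+ #|F| * ([forall j in F, e j == i j])%:R.
Proof.
rewrite big_mkcond /=.
rewrite (eq_bigr (fun S : {set 'I_n} => \prod_j (if j \in S then (if j \in F then sg (e j) * sg (i j) else 0) else 1))); last first.
  move=> S _; case: ifP => SF.
    rewrite chiM; apply: eq_bigr => j _; case: ifP => // jS.
    by rewrite (subsetP SF).
  have [j /andP [jS jF]] : exists j, (j \in S) && (j \notin F).
    apply/existsP; apply: contraFT SF => /existsPn h; apply/subsetP => j jS.
    by have := h j; rewrite jS /= negbK.
  by rewrite (bigD1 j) //= jS (negbTE jF) mul0r.
rewrite sum_sets.
case: (boolP [forall j in F, e j == i j]) => [/forallP h|/forallPn [j]].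
  rewrite mulr1 (bigID (fun j => j \in F)) /= [X in _ * X]big1 ?mulr1; last first.
    by move=> j /negbTE ->.
  rewrite (eq_bigr (fun _ => 2)) ?prodr_const // => j jF.
  by have := h j; rewrite jF /= => /eqP ->; rewrite sg2.
rewrite negb_imply => /andP [jF ej].
rewrite mulr0 (bigD1 j) //= jF; move: ej; case: (e j); case: (i j) => //= _; by rewrite mul0r.
Qed.

Lemma facet_above n (C : {set {set 'I_n}}) S : S \in C -> exists F, is_facet C F && (S \subset F).
Proof.
move=> SC.
have P0 : (S \in C) && (S \subset S) by rewrite SC subxx.
case: (@arg_maxnP _ S (fun G : {set 'I_n} => (G \in C) && (S \subset G)) (fun G : {set 'I_n} => #|G|) P0) => F /andP [FC SF] Fmax.
exists F; rewrite SF andbT /is_facet FC /=; apply/forallP => G; apply/implyP => GC; apply/implyP => FG.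
have := Fmax G; rewrite GC (subset_trans SF FG) => /(_ isT) hc.
by rewrite eq_sym eqEcard FG; exact: hc.
Qed.

Lemma kerC n (C : {set {set 'I_n}}) (HC : simplicial_complex C) (u : {ffun colT n -> int}) :
  in_kernel (@A_mat n C) u <-> (forall S, S \in C -> \sum_i chi S i * u i = 0).
Proof.
split.
- move/forallP => hk S SC.
  have [F /andP [FF SF]] := facet_above SC.
  pose canon (e : colT n) := [forall j, (j \notin F) ==> ~~ e j].
  pose A' (e i : colT n) : int := ([forall j in F, e j == i j])%:R.
  have h0 : forall e, canon e -> \sum_i A' e i * u i = 0.
    move=> e ce; have rw : is_row C (F, e) by rewrite /is_row /= FF.
    by have := hk (exist _ (F, e) rw) => /eqP.
  pose restr (i : colT n) : colT n := [ffun j => (j \in F) && i j].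
  have cr : forall i, canon (restr i).
    by move=> i; apply/forallP => j; apply/implyP => jF; rewrite ffunE (negbTE jF).
  have A'E : forall e i, canon e -> A' e i = (e == restr i)%:R.
    move=> e i /forallP ce; rewrite /A'; suff -> : [forall j in F, e j == i j] = (e == restr i) by [].
    apply/forallP/eqP => [h|->].
      apply/ffunP => j; rewrite ffunE; case: (boolP (j \in F)) => jF.
        by have := h j; rewrite jF => /eqP.
      by have := ce j; rewrite jF => /negbTE.
    by move=> j; apply/implyP => jF; rewrite ffunE jF.
  have chiE : forall i, chi S i = \sum_(e | canon e) chi S e * A' e i.
    move=> i; rewrite (bigD1 (restr i)) //= A'E // eqxx mulr1 big1 ?addr0.
      apply: eq_bigr => j _; case: ifP => // jS; by rewrite ffunE (subsetP SF).
    by move=> e /andP [ce ne]; rewrite A'E // (negbTE ne) mulr0.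
  under eq_bigr do rewrite chiE big_distrl /=.
  rewrite exchange_big /=; apply: big1 => e ce.
  transitivity (chi S e * \sum_i A' e i * u i); last by rewrite h0 // mulr0.
  by rewrite big_distrr; apply: eq_bigr => i _; rewrite /= mulrA.
- move=> h; apply/forallP => r; apply/eqP.
  case: r => [[F e] hr]; have /andP [/andP [FC _] _] := hr.
  have p0 : (2 ^+ #|F| : int) != 0 by rewrite expf_neq0.
  apply: (mulfI p0); rewrite mulr0 /A_mat /=.
  transitivity (\sum_i \sum_(S : {set 'I_n} | S \subset F) chi S e * chi S i * u i).
    rewrite big_distrr; apply: eq_bigr => i _ /=; rewrite mulrA -restr_id big_distrl //.
  rewrite exchange_big /=; apply: big1 => S SF.
  by under eq_bigr do rewrite -mulrA; rewrite -big_distrr /= h ?mulr0 // (HC F).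
Qed.


Lemma dual_sc n (C : {set {set 'I_n}}) : simplicial_complex C -> simplicial_complex (alexander_dual C).
Proof.
move=> HC F G; rewrite !inE => hF GF; apply: contra hF => hG; apply: (HC (~: G)) => //.
by rewrite setCS.
Qed.

Lemma chiC n (T : {set 'I_n}) i : chi T i * chi setT i = chi (~: T) i.
Proof.
rewrite /chi -big_split; apply: eq_bigr => j _; rewrite in_setT inE.
by case: (j \in T) => /=; rewrite ?sg2 ?mul1r.
Qed.

Lemma chiT2 n (i : colT n) : chi setT i * chi setT i = 1.
Proof. by rewrite chiM big1 // => j _; rewrite in_setT sg2. Qed.

Lemma kerD n (C : {set {set 'I_n}}) (HC : simplicial_complex C) (u : {ffun colT n -> int}) :
  in_kernel (@A_mat n (alexander_dual C)) u <->
  V (@chi n) (predC (fun S => S \in C)) (tw (fun i => chi setT i) u).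
Proof.
rewrite (kerC (dual_sc HC)); split.
- move=> h T /= nT.
  under eq_bigr do rewrite ffunE mulrA chiC.
  by apply: h; rewrite inE setCK.
- move=> h S; rewrite inE => hS.
  have := h (~: S) hS.
  by under eq_bigr do rewrite ffunE mulrA chiC setCK.
Qed.

Theorem proposition3p7 (n : nat) (C : {set {set 'I_n}}) :
  simplicial_complex C ->
  (unimodular_complex C <-> unimodular_complex (alexander_dual C)).
Proof.
move=> HC.
have c0 : (2 ^+ n : int) != 0 by rewrite expf_neq0.
pose P : pred {set 'I_n} := fun S => S \in C.
have e1 : unimodular_complex C <-> regular (V (@chi n) P).
  rewrite /unimodular_complex unimod_regular; split => h; apply: (regular_ext _ h) => u.
    exact: (kerC HC u).
  exact: iff_sym (kerC HC u).
have e2 : unimodular_complex (alexander_dual C) <->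
    regular (fun u => V (@chi n) (predC P) (tw (fun i => chi setT i) u)).
  rewrite /unimodular_complex unimod_regular; split => h; apply: (regular_ext _ h) => u.
    exact: (kerD HC u).
  exact: iff_sym (kerD HC u).
have e3 : regular (V (@chi n) P) <-> regular (V (@chi n) (predC P)).
  split; first exact: (reg_dual c0 (@chiO1 n) (@chiO2 n)).
  move=> h; apply: (regular_ext _ (reg_dual c0 (@chiO1 n) (@chiO2 n) h)) => u.
  split => hu a /= Pa; apply: hu => //=; by rewrite ?negbK in Pa *.
have e4 : regular (V (@chi n) (predC P)) <->
    regular (fun u => V (@chi n) (predC P) (tw (fun i => chi setT i) u)).
  split => h; first exact: (regular_tw (@chiT2 n)).
  have := regular_tw (@chiT2 n) h; apply: regular_ext => u.
  by rewrite twK //; exact: chiT2.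
split => h; [apply/e2/e4/e3/e1 | apply/e1/e3/e4/e2]; exact: h.
Qed.
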